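(* Let $\mathcal{T}$ be an essentially small triangulated category and let $(X,\sigma)$ be a classifying support data for $\mathcal{T}$. Then there is a homeomorphism $X\cong\operatorname{Spec}_\triangle(\mathcal{T})$.
   Context: A support data for $\mathcal{T}$ is a pair $(X,\sigma)$ of a topological space $X$ and an assignment $\sigma$ sending each object $M$ of $\mathcal{T}$ to a closed subset $\sigma(M)\subseteq X$ such that: $\sigma(0)=\emptyset$; $\sigma(M[n])=\sigma(M)$ for all $M$ and $n\in\mathbb{Z}$; $\sigma(M)\subseteq\sigma(L)\cup\sigma(N)$ for every exact triangle $L\to M\to N\to L[1]$; and $\sigma(M\oplus N)=\sigma(M)\cup\sigma(N)$. It is classifying if (i) $X$ is a noetherian sober space (sober: every irreducible closed subset has a unique generic point), and (ii) the maps $\mathcal{X}\mapsto\sigma(\mathcal{X}):=\bigcup_{M\in\mathcal{X}}\sigma(M)$ and $W\mapsto\sigma^{-1}(W):=\{M\in\mathcal{T}\mid\sigma(M)\subseteq W\}$ are mutually inverse lattice isomorphisms between the set of thick subcategories of $\mathcal{T}$ and the set of specialization-closed subsets of $X$ (unions of closed subsets). A thick subcategory $\mathcal{P}$ of $\mathcal{T}$ is called prime if among all thick subcategories $\mathcal{X}$ with $\mathcal{P}\subsetneq\mathcal{X}$ there is a unique minimal one. $\operatorname{Spec}_\triangle(\mathcal{T})$ is the set of prime thick subcategories, with closed subsets $\mathsf{Z}(\mathcal{E}):=\{\mathcal{P}\mid\mathcal{P}\cap\mathcal{E}=\emptyset\}$ for families $\mathcal{E}$ of objects of $\mathcal{T}$.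 *)

(* Defs.v *)
From HB Require Import structures.
From mathcomp Require Import all_boot all_order all_algebra.
From mathcomp Require Import all_classical topology.
Set Implicit Arguments. Unset Strict Implicit. Unset Printing Implicit Defensive.
Import GRing.Theory.
Local Open Scope ring_scope.
Local Open Scope classical_set_scope.

(* Objects form a type (so the category is (essentially) small),      *)
Record tcat_data := TCatData {
  Ob :> Type;
  Hom : Ob -> Ob -> zmodType;
  idm : forall A, Hom A A;
  comp : forall A B C, Hom B C -> Hom A B -> Hom A C;
  shift : Ob -> Ob;
  shiftm : forall A B, Hom A B -> Hom (shift A) (shift B);
  zero : Ob;
  dsum : Ob -> Ob -> Ob;
  dinl : forall A B, Hom A (dsum A B);
  dinr : forall A B, Hom B (dsum A B);
  dprl : forall A B, Hom (dsum A B) A;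
  dprr : forall A B, Hom (dsum A B) B;
  dist : forall A B C, Hom A B -> Hom B C -> Hom C (shift A) -> Prop
}.
Arguments idm {t} A.
Arguments comp {t A B C}.
Arguments shift {t}.
Arguments shiftm {t A B}.
Arguments zero {t}.
Arguments dsum {t}.
Arguments dinl {t A B}.
Arguments dinr {t A B}.
Arguments dprl {t A B}.
Arguments dprr {t A B}.
Arguments dist {t A B C}.

Section TriangulatedAxioms.
Variable T : tcat_data.

Definition is_iso (A B : T) (f : Hom A B) :=
  exists g : Hom B A, comp g f = idm A /\ comp f g = idm B.
Definition iso (A B : T) := exists f : Hom A B, is_iso f.

Definition additive_axioms :=
  [/\ (forall (A B C D : T) (f : Hom A B) (g : Hom B C) (h : Hom C D),
          comp h (comp g f) = comp (comp h g) f),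
      (forall (A B : T) (f : Hom A B), comp (idm B) f = f /\ comp f (idm A) = f),
      (forall (A B C : T) (f f' : Hom B C) (g : Hom A B),
          comp (f + f') g = comp f g + comp f' g) /\
      (forall (A B C : T) (f : Hom B C) (g g' : Hom A B),
          comp f (g + g') = comp f g + comp f g'),
      (forall A : T, (forall f g : Hom zero A, f = g) /\ (forall f g : Hom A zero, f = g))
    & (forall A B : T,
          [/\ comp (@dprl _ A B) dinl = idm A, comp (@dprr _ A B) dinr = idm B,
              comp (@dprl _ A B) dinr = 0, comp (@dprr _ A B) dinl = 0
            & comp dinl dprl + comp dinr dprr = idm (dsum A B)])].

Definition shift_axioms :=
  [/\ (forall A : T, shiftm (idm A) = idm (shift A)),
      (forall (A B C : T) (f : Hom A B) (g : Hom B C),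
          shiftm (comp g f) = comp (shiftm g) (shiftm f)),
      (forall (A B : T) (f g : Hom A B), shiftm (f + g) = shiftm f + shiftm g),
      (forall A B : T, bijective (@shiftm T A B))
    & (forall A : T, exists B : T, iso (shift B) A)].

Definition tri_morph (A B C A' B' C' : T)
  (f : Hom A B) (g : Hom B C) (h : Hom C (shift A))
  (f' : Hom A' B') (g' : Hom B' C') (h' : Hom C' (shift A'))
  (a : Hom A A') (b : Hom B B') (c : Hom C C') :=
  [/\ comp b f = comp f' a, comp c g = comp g' b & comp (shiftm a) h = comp h' c].

Definition TR1 :=
  [/\ (forall (A B C A' B' C' : T)
          (f : Hom A B) (g : Hom B C) (h : Hom C (shift A))
          (f' : Hom A' B') (g' : Hom B' C') (h' : Hom C' (shift A'))
          (a : Hom A A') (b : Hom B B') (c : Hom C C'),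
          dist f g h -> tri_morph f g h f' g' h' a b c ->
          is_iso a -> is_iso b -> is_iso c -> dist f' g' h'),
      (forall A : T, dist (idm A) (0 : Hom A zero) (0 : Hom zero (shift A)))
    & (forall (A B : T) (f : Hom A B),
          exists (C : T) (g : Hom B C) (h : Hom C (shift A)), dist f g h)].

Definition TR2 :=
  forall (A B C : T) (f : Hom A B) (g : Hom B C) (h : Hom C (shift A)),
    dist f g h <-> dist g h (- shiftm f).

Definition TR3 :=
  forall (A B C A' B' C' : T)
    (f : Hom A B) (g : Hom B C) (h : Hom C (shift A))
    (f' : Hom A' B') (g' : Hom B' C') (h' : Hom C' (shift A'))
    (a : Hom A A') (b : Hom B B'),
    dist f g h -> dist f' g' h' -> comp b f = comp f' a ->
    exists c : Hom C C', tri_morph f g h f' g' h' a b c.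

Definition TR4 :=
  forall (A B C Q1 Q2 Q3 : T) (f : Hom A B) (g : Hom B C)
    (p1 : Hom B Q1) (d1 : Hom Q1 (shift A))
    (p2 : Hom C Q2) (d2 : Hom Q2 (shift A))
    (p3 : Hom C Q3) (d3 : Hom Q3 (shift B)),
    dist f p1 d1 -> dist (comp g f) p2 d2 -> dist g p3 d3 ->
    exists (a : Hom Q1 Q2) (b : Hom Q2 Q3),
      [/\ dist a b (comp (shiftm p1) d3),
          comp a p1 = comp p2 g, comp d2 a = d1,
          comp b p2 = p3 & comp d3 b = comp (shiftm f) d2].

Definition triangulated :=
  [/\ additive_axioms, shift_axioms, TR1, TR2 & (TR3 /\ TR4)].

(* Thick subcategories (full, replete, triangulated, closed under      *)
(* direct summands), given by their classes of objects.                *)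
Definition thick (P : set T) :=
  [/\ P zero,
      (forall A B : T, iso A B -> P A -> P B),
      (forall A : T, P A <-> P (shift A)),
      (forall (A B C : T) (f : Hom A B) (g : Hom B C) (h : Hom C (shift A)),
          dist f g h ->
          [/\ P A -> P B -> P C, P B -> P C -> P A & P A -> P C -> P B])
    & (forall A B : T, P (dsum A B) -> P A /\ P B)].

Definition minimal_over (P Q : set T) :=
  [/\ thick Q, P `<=` Q, P <> Q &
      (forall Y : set T, thick Y -> P `<=` Y -> P <> Y -> Y `<=` Q -> Y = Q)].

Definition prime (P : set T) :=
  thick P /\
  exists Q : set T, minimal_over P Q /\ forall Q', minimal_over P Q' -> Q' = Q.

Definition Spec := {P : set T | prime P}.

(* the closed subsets Z(E) of Spec *)
Definition Zcl (E : set T) : set Spec :=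
  [set P : Spec | proj1_sig P `&` E = set0].

End TriangulatedAxioms.

Section Topo.
Variable X : topologicalType.

Definition irreducible_closed (Z : set X) :=
  [/\ closed Z, Z <> set0 &
      forall Z1 Z2 : set X, closed Z1 -> closed Z2 -> Z = Z1 `|` Z2 ->
        Z = Z1 \/ Z = Z2].

Definition noetherian_space :=
  forall F : nat -> set X, (forall n, closed (F n)) ->
    (forall n, F n.+1 `<=` F n) -> exists N, forall n, (N <= n)%N -> F n = F N.

Definition sober :=
  forall Z : set X, irreducible_closed Z ->
    exists x, closure [set x] = Z /\ forall y, closure [set y] = Z -> y = x.

(* union of closed subsets *)
Definition specialization_closed (W : set X) :=
  forall x, W x -> exists Z : set X, [/\ closed Z, Z x & Z `<=` W].
End Topo.

Section Support.
Variables (T : tcat_data) (X : topologicalType) (sigma : T -> set X).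

Definition support_data :=
  [/\ (forall M : T, closed (sigma M)),
      sigma zero = set0,
      (* sigma(M[n]) = sigma(M) for all n : Z; M[1] = shift M and
         M[-1] is any object N with shift N isomorphic to M *)
      (forall M : T, sigma (shift M) = sigma M) /\
      (forall M N : T, iso (shift N) M -> sigma N = sigma M),
      (forall (A B C : T) (f : Hom A B) (g : Hom B C) (h : Hom C (shift A)),
          dist f g h -> sigma B `<=` sigma A `|` sigma C)
    & (forall M N : T, sigma (dsum M N) = sigma M `|` sigma N)].

Definition sigma_of (P : set T) : set X := \bigcup_(M in P) sigma M.
Definition sigma_inv (W : set X) : set T := [set M | sigma M `<=` W].

(* the (inclusion-preserving, hence lattice) maps sigma_of and sigma_inv
   are mutually inverse bijections between thick subcategories and
   specialization-closed subsets *)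
Definition classifying :=
  [/\ support_data, noetherian_space X, sober X,
      (forall P : set T, thick P ->
         specialization_closed (sigma_of P) /\ sigma_inv (sigma_of P) = P)
    & (forall W : set X, specialization_closed W ->
         thick (sigma_inv W) /\ sigma_of (sigma_inv W) = W)].
End Support.

(* Main.v *)
From Stdlib Require Import Classical.
Require Import Defs.
From HB Require Import structures.
From mathcomp Require Import all_boot all_order all_algebra.
From mathcomp Require Import all_classical topology.
Local Open Scope classical_set_scope.

Definition cl {X : topologicalType} (x : X) := closure [set x].

Lemma cl_sub {X : topologicalType} {C : set X} {y : X} :
  closed C -> C y -> cl y `<=` C.
Proof. move=> Ccl Cy; apply: subset_trans Ccl; apply: closureS => z ->. done. Qed.

Lemma cl_x {X : topologicalType} (x : X) : cl x x.
Proof. exact: subset_closure. Qed.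

Lemma cl_trans {X : topologicalType} {y z : X} : cl y z -> cl z `<=` cl y.
Proof. move=> h; apply: cl_sub => //; exact: closed_closure. Qed.

Lemma irr_cl {X : topologicalType} (x : X) : irreducible_closed (cl x).
Proof.
split; first exact: closed_closure.
  by move=> h; have := cl_x x; rewrite h.
move=> Z1 Z2 c1 c2 e.
have : (Z1 `|` Z2) x by rewrite -e; exact: cl_x.
case=> hx; [left|right]; rewrite eqEsubset; split.
- exact: cl_sub.
- by rewrite e; apply: subsetUl.
- exact: cl_sub.
- by rewrite e; apply: subsetUr.
Qed.

Lemma T0 {X : topologicalType} (sob : sober X) (x y : X) : cl x = cl y -> x = y.
Proof.
move=> e; have [g [_ u]] := sob _ (irr_cl x).
by rewrite (u x erefl) (u y (esym e)).
Qed.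

Lemma cl_eq {X : topologicalType} (x y : X) : cl x y -> cl y x -> cl x = cl y.
Proof. by move=> h1 h2; rewrite eqEsubset; split; apply: cl_trans. Qed.

Lemma dcc_min {X : topologicalType} (noeth : noetherian_space X)
  (Q : set X -> Prop) (A : set X) :
  Q A -> (forall B, Q B -> closed B) ->
  exists B, Q B /\ forall B', Q B' -> B' `<=` B -> B' = B.
Proof.
move=> QA Qcl; apply: NNPP => nomin.
have H : forall B, Q B -> exists B', [/\ Q B', B' `<=` B & B' <> B].
  move=> B QB; apply: NNPP => hne; apply: nomin; exists B; split=> // B' QB' sub.
  by apply: NNPP => neq; apply: hne; exists B'.
have step : forall s : {B | Q B}, {s' : {B | Q B} | proj1_sig s' `<=` proj1_sig s /\ proj1_sig s' <> proj1_sig s}.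
  move=> s; apply: cid; have [B' [QB' ? ?]] := H _ (proj2_sig s).
  by exists (exist _ B' QB').
pose f s := proj1_sig (step s).
pose F n := proj1_sig (iter n f (exist _ A QA)).
have [N hN] := noeth F (fun n => Qcl _ (proj2_sig _))
  (fun n => (proj2_sig (step (iter n f (exist _ A QA)))).1).
have := hN N.+1 (leqnSn N).
exact: (proj2_sig (step (iter N f (exist _ A QA)))).2.
Qed.

Lemma pointmin {X : topologicalType} (noeth : noetherian_space X) (sob : sober X)
  (U : set X) (y : X) : U y ->
  exists m, [/\ U m, cl y m & forall z, U z -> cl m z -> z = m].
Proof.
move=> Uy.
have [B [[m [Um ym ->]] minB]] := dcc_min noeth (fun B => exists z, [/\ U z, cl y z & B = cl z])
  (cl y) (ex_intro _ y (And3 Uy (cl_x y) erefl)) (fun B '(ex_intro z (And3 _ _ e)) => ltac:(rewrite e; exact: closed_closure)).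
exists m; split=> // z Uz mz; apply: T0 => //; apply: minB; last exact: cl_trans.
by exists z; split=> //; exact (cl_trans ym z mz).
Qed.

Definition Wx {X : topologicalType} (x : X) : set X := [set y | ~ cl y x].

Lemma Wspec {X : topologicalType} (x : X) : specialization_closed (Wx x).
Proof.
move=> y hy; exists (cl y); split; [exact: closed_closure| exact: cl_x|].
move=> z yz zx; apply: hy; exact (cl_trans yz x zx).
Qed.

Lemma Wsub {X : topologicalType} (x : X) (C : set X) :
  closed C -> (C `<=` Wx x <-> ~ C x).
Proof.
move=> Cc; split=> [h Cx|nCx y Cy hyx]; first exact: (h x Cx (cl_x x)).
exact: nCx (cl_sub Cc Cy x hyx).
Qed.


Lemma sinv_inj {T : tcat_data} {X : topologicalType} {sigma : T -> set X}
  (Hs : classifying sigma) {W1 W2 : set X} :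
  specialization_closed W1 -> specialization_closed W2 ->
  sigma_inv sigma W1 = sigma_inv sigma W2 -> W1 = W2.
Proof.
case: Hs => _ _ _ _ hW h1 h2 e.
by rewrite -(hW W1 h1).2 -(hW W2 h2).2 e.
Qed.

Lemma sub_of {T : tcat_data} {X : topologicalType} {sigma : T -> set X}
  (Hs : classifying sigma) {W : set X} {Q : set T} :
  specialization_closed W -> sigma_inv sigma W `<=` Q -> W `<=` sigma_of sigma Q.
Proof.
case: Hs => _ _ _ _ hW Ws sub.
rewrite -(hW W Ws).2 => z [M hM hz]; exists M => //; exact: sub.
Qed.

Lemma newpt {T : tcat_data} {X : topologicalType} {sigma : T -> set X}
  (Hs : classifying sigma) {W : set X} {Q : set T} :
  specialization_closed W -> thick Q -> sigma_inv sigma W `<=` Q ->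
  sigma_inv sigma W <> Q -> exists y, sigma_of sigma Q y /\ ~ W y.
Proof.
move=> Ws thQ sub neq; have WQ := sub_of Hs Ws sub.
case: (Hs) => _ _ _ hP _; have [QS eQ] := hP Q thQ.
apply: NNPP => hn; apply: neq; rewrite -eQ; congr (sigma_inv sigma _).
apply/seteqP; split=> // z Qz; apply: NNPP => nWz; apply: hn; by exists z.
Qed.

Lemma Vspec {X : topologicalType} {W : set X} {m : X} :
  specialization_closed W -> (forall z, ~ W z -> cl m z -> z = m) ->
  specialization_closed (W `|` [set m]).
Proof.
move=> Ws hm y [Wy|->].
  have [Z [Zc Zy ZW]] := Ws y Wy; exists Z; split=> //.
  exact: (subset_trans ZW (@subsetUl _ _ _)).
exists (cl m); split; [exact: closed_closure| exact: cl_x|].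
move=> z mz; case: (Classical_Prop.classic (W z)) => [Wz|nWz]; [left=> //|right; exact: hm].
Qed.

Lemma minover {T : tcat_data} {X : topologicalType} {sigma : T -> set X}
  (Hs : classifying sigma) {W : set X} {m : X} :
  specialization_closed W -> ~ W m -> (forall z, ~ W z -> cl m z -> z = m) ->
  minimal_over (sigma_inv sigma W) (sigma_inv sigma (W `|` [set m])).
Proof.
move=> Ws nWm hm; have VS := Vspec Ws hm.
case: (Hs) => _ _ _ hP hW.
split.
- exact: (hW _ VS).1.
- move=> M /= h; exact: (subset_trans h (@subsetUl _ _ _)).
- move=> e; apply: nWm; rewrite (sinv_inj Hs Ws VS e); by right.
move=> Y thY sub neq sub2.
have [VyS eY] := hP Y thY.
have WVy := sub_of Hs Ws sub.
have VyV : sigma_of sigma Y `<=` W `|` [set m].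
  rewrite -(hW _ VS).2 => z [M hM hz]; exists M => //; exact: sub2.
have Vym : sigma_of sigma Y m.
  apply: NNPP => nVy; apply: neq; rewrite -eY; congr (sigma_inv sigma _).
  apply/seteqP; split=> // z Vyz; case: (VyV z Vyz) => // zm.
  by rewrite zm in Vyz.
rewrite -eY; congr (sigma_inv sigma _); apply/seteqP; split=> // z [Wz| ->] //.
exact: WVy.
Qed.

Lemma minover_uniq {T : tcat_data} {X : topologicalType} {sigma : T -> set X}
  (Hs : classifying sigma) {W : set X} {m : X} :
  specialization_closed W -> ~ W m -> (forall z, ~ W z -> cl m z -> z = m) ->
  (forall y, ~ W y -> cl y m) ->
  forall Q', minimal_over (sigma_inv sigma W) Q' ->
    Q' = sigma_inv sigma (W `|` [set m]).
Proof.
move=> Ws nWm hm hall Q' mQ; have [thV subV neqV _] := minover Hs Ws nWm hm.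
case: mQ => thQ subQ neqQ minQ.
have VS := Vspec Ws hm.
case: (Hs) => _ _ _ hP hW.
have [QS eQ] := hP Q' thQ.
have WQ := sub_of Hs Ws subQ.
have [y [Qy nWy]] := newpt Hs Ws thQ subQ neqQ.
have Qm : sigma_of sigma Q' m.
  have [Z [Zc Zy ZQ]] := QS y Qy; apply: ZQ; exact (cl_sub Zc Zy m (hall y nWy)).
symmetry; apply: minQ => //.
rewrite -eQ => M /= h z /h [Wz| ->] //; exact: WQ.
Qed.

Definition phi0 {T : tcat_data} {X : topologicalType} (sigma : T -> set X) (x : X) :=
  sigma_inv sigma (Wx x).

Lemma prime_phi0 {T : tcat_data} {X : topologicalType} {sigma : T -> set X}
  (Hs : classifying sigma) (x : X) : Defs.prime (phi0 sigma x).
Proof.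
have [_ _ sob _ hW] := Hs.
have nWm : ~ Wx x x by move=> h; exact: h (cl_x x).
have hm : forall z, ~ Wx x z -> cl x z -> z = x.
  move=> z nz xz; apply: (T0 sob); apply: cl_eq => //; exact: NNPP.
rewrite /phi0; split; first exact: (hW _ (Wspec x)).1.
exists (sigma_inv sigma (Wx x `|` [set x])); split.
  exact: (minover Hs (Wspec x) nWm hm).
exact: (minover_uniq Hs (Wspec x) nWm hm (fun y h => NNPP _ h)).
Qed.

Lemma prime_shape {T : tcat_data} {X : topologicalType} {sigma : T -> set X}
  (Hs : classifying sigma) {W : set X} {Q : set T} :
  specialization_closed W -> minimal_over (sigma_inv sigma W) Q ->
  (forall Q', minimal_over (sigma_inv sigma W) Q' -> Q' = Q) ->
  exists x, sigma_inv sigma W = phi0 sigma x.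
Proof.
move=> Ws mQ uQ.
have [_ noeth sob hP hW] := Hs.
have [thQ subQ neqQ _] := mQ.
have [y0 [_ nWy0]] := newpt Hs Ws thQ subQ neqQ.
have [x [nWx _ hx]] := @pointmin _ noeth sob (~` W) y0 nWy0.
have claim : forall m, ~ W m -> (forall z, ~ W z -> cl m z -> z = m) ->
    W `|` [set m] = sigma_of sigma Q.
  move=> m nWm hm.
  by rewrite -[LHS](hW _ (Vspec Ws hm)).2 (uQ _ (minover Hs Ws nWm hm)).
exists x; congr (sigma_inv sigma _); apply/seteqP; split.
  move=> z Wz hcl; have [Z [Zc Zz ZW]] := Ws z Wz; apply: nWx; apply: ZW.
  exact (cl_sub Zc Zz x hcl).
move=> z nclzx; apply: NNPP => nWz.
have [m [nWm zm hm]] := @pointmin _ noeth sob (~` W) z nWz.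
have e1 := claim m nWm hm; have e2 := claim x nWx hx.
have : (W `|` [set m]) x by rewrite e1 -e2; right.
case=> [//|xm]; apply: nclzx; by rewrite xm.
Qed.

Lemma cover {T : tcat_data} {X : topologicalType} {sigma : T -> set X}
  (Hs : classifying sigma) (A : set X) : closed A ->
  (forall y, A y -> exists M, sigma M y /\ sigma M `<=` A) ->
  exists M, sigma M = A.
Proof.
move=> Acl hyp; apply: NNPP => nex.
have [supp noeth sob _ _] := Hs.
have [scl s0 _ _ ssum] := supp.
have QA : [/\ closed A, A `<=` A & ~ exists M, sigma M `<=` A /\ A `<=` sigma M].
  split=> // -[M [h1 h2]]; apply: nex; exists M; by apply/seteqP; split.
have [B [[Bc BA Bbad] minB]] := dcc_min noeth
  (fun B => [/\ closed B, B `<=` A & ~ exists M, sigma M `<=` A /\ B `<=` sigma M])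
  A QA (fun B '(And3 c _ _) => c).
have irr : irreducible_closed B.
  split=> //.
    move=> B0; apply: Bbad; exists Defs.zero; rewrite s0 B0; split=> //.
  move=> Z1 Z2 c1 c2 e; apply: NNPP => /not_or_and [n1 n2].
  have good : forall Z, closed Z -> Z `<=` B -> Z <> B ->
      exists M, sigma M `<=` A /\ Z `<=` sigma M.
    move=> Z Zc ZB nZ; apply: NNPP => nn; apply: nZ; apply: minB => //.
    split=> //; exact: subset_trans ZB BA.
  have [M1 [h11 h12]] : exists M, sigma M `<=` A /\ Z1 `<=` sigma M.
    apply: good => //; [rewrite e; exact: subsetUl| by move=> h; apply: n1].
  have [M2 [h21 h22]] : exists M, sigma M `<=` A /\ Z2 `<=` sigma M.
    apply: good => //; [rewrite e; exact: subsetUr| by move=> h; apply: n2].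
  apply: Bbad; exists (dsum M1 M2); rewrite ssum; split.
    by move=> z [h|h]; [exact: h11|exact: h21].
  rewrite e => z [h|h]; [left; exact: h12| right; exact: h22].
have [b [eb _]] := sob B irr.
have Bb : B b by rewrite -eb; exact: cl_x.
have [M [Mb MA]] := hyp b (BA b Bb).
apply: Bbad; exists M; split=> //; rewrite -eb; exact: (cl_sub (scl M) Mb).
Qed.

Theorem theorem2p16 (T : tcat_data) (HT : triangulated T)
  (X : topologicalType) (sigma : T -> set X)
  (Hsigma : classifying sigma) :
  exists phi : X -> Spec T,
    bijective phi /\
    forall A : set X, closed A <-> exists E : set T, phi @` A = Zcl E.
Proof.
have [supp noeth sob hP hW] := Hsigma.
have [scl s0 _ _ ssum] := supp.
pose phi (x : X) : Spec T := exist _ (phi0 sigma x) (prime_phi0 Hsigma x).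
have surj : forall P : Spec T, exists x, phi x = P.
  move=> [P pP]; case: (pP) => thP [Q [mQ uQ]].
  have [WS eP] := hP P thP.
  have mQ' : minimal_over (sigma_inv sigma (sigma_of sigma P)) Q by rewrite eP.
  have uQ' : forall Q', minimal_over (sigma_inv sigma (sigma_of sigma P)) Q' -> Q' = Q
    by rewrite eP.
  have [x ex] := prime_shape Hsigma WS mQ' uQ'.
  rewrite eP in ex.
  exists x; apply: eq_sig_hprop => [? ? ?|]; first exact: Prop_irrelevance.
  by rewrite /= ex.
have inj : injective phi.
  move=> x x' e; have e0 : phi0 sigma x = phi0 sigma x' by have := congr1 (@proj1_sig _ _) e.
  have eW := sinv_inj Hsigma (Wspec x) (Wspec x') e0.
  apply: (T0 sob); apply: cl_eq; apply: NNPP => n.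
    have : Wx x x by rewrite eW; exact: n.
    by apply; exact: cl_x.
  have : Wx x' x' by rewrite -eW; exact: n.
  by apply; exact: cl_x.
exists phi; split.
  pose g P := proj1_sig (cid (surj P)).
  exists g.
    move=> x; apply: inj; exact: (proj2_sig (cid (surj (phi x)))).
  move=> P; exact: (proj2_sig (cid (surj P))).
move=> A; split.
  move=> Acl.
  have AS : specialization_closed A by move=> y Ay; exists A; split.
  have [M0 eM0] : exists M, sigma M = A.
    apply: (cover Hsigma A Acl) => y; rewrite -{1}(hW A AS).2 => -[M hM hy].
    by exists M.
  exists [set M0]; apply/seteqP; split.
    move=> P [x Ax <-]; rewrite /Zcl /=; apply/seteqP; split=> // M [hM eM].
    rewrite /= in eM; subst M.
    have hM' : sigma M0 `<=` Wx x := hM.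
    by case: ((Wsub x _ (scl M0)).1 hM'); rewrite eM0.
  move=> P hP'; have [x ex] := surj P; rewrite -ex in hP'; rewrite -ex.
  exists x => //; apply: NNPP => nAx.
  have h0 : phi0 sigma x M0.
    rewrite /phi0 /sigma_inv /= eM0; exact: (Wsub x _ Acl).2.
  have : (set0 : set T) M0 by rewrite -hP'; split.
  done.
move=> [E eE].
have -> : A = \bigcap_(M in E) sigma M.
  apply/seteqP; split.
    move=> x Ax M EM.
    have : Zcl E (phi x) by rewrite -eE; exists x.
    rewrite /Zcl /= => h; apply: NNPP => n.
    have hM : phi0 sigma x M by exact: (Wsub x _ (scl M)).2.
    have : (set0 : set T) M by rewrite -h; split.
    done.
  move=> x hx.
  have : Zcl E (phi x).
    rewrite /Zcl /=; apply/seteqP; split=> // M [hM EM].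
    exact: ((Wsub x _ (scl M)).1 hM (hx M EM)).
  rewrite -eE => -[x' Ax' e]; by rewrite -(inj _ _ e).
exact: closed_bigI.
Qed.
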